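(* For every behavior $r$ and every language $K\subseteq\Sigma^*$, $L(\mathcal C(r),K)=L(\mathcal C(r))\,\|\,K$.
   Context: Let $\Sigma$ be a finite alphabet. Behaviors are the terms generated by $r,s ::= \phi \mid \varepsilon \mid x\ (x\in\Sigma) \mid r+s \mid r\cdot s \mid r^* \mid \mathrm{fork}(r)$. For words $v,w\in\Sigma^*$ the shuffle $v\| w\subseteq \Sigma^*$ is defined by $\varepsilon\|w=\{w\}$, $v\|\varepsilon=\{v\}$, $xv\|yw=\{x\}\cdot(v\|yw)\cup\{y\}\cdot(xv\|w)$ for $x,y\in\Sigma$, and it is lifted to languages by $L\|M=\bigcup_{v\in L,w\in M} v\|w$; $L\cdot M$ denotes concatenation of languages. For $K\subseteq\Sigma^*$ the trace language $L(r,K)\subseteq\Sigma^*$ is defined by structural recursion: $L(\phi,K)=\emptyset$, $L(\varepsilon,K)=K$, $L(x,K)=\{x\}\cdot K$, $L(r+s,K)=L(r,K)\cup L(s,K)$, $L(r\cdot s,K)=L(r,L(s,K))$, $L(r^*,K)$ is the least fixpoint (w.r.t. $\subseteq$) of the monotone map $X\mapsto L(r,X)\cup K$, and $L(\mathrm{fork}(r),K)=L(r)\|K$, where $L(r)=L(r,\{\varepsilon\})$. The concurrent part $\mathcal C(r)$ is the behavior defined by: $\mathcal C(\phi)=\phi$, $\mathcal C(\varepsilon)=\varepsilon$, $\mathcal C(x)=\phi$, $\mathcal C(r+s)=\mathcal C(r)+\mathcal C(s)$, $\mathcal C(r\cdot s)=\mathcal C(r)\cdot\mathcal C(s)$, $\mathcal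 C(r^* )=\mathcal C(r)^*$, $\mathcal C(\mathrm{fork}(r))=\mathrm{fork}(r)$. *)

(* Defs.v *)
From Stdlib Require Import List.
Import ListNotations.
Set Implicit Arguments.

Section Behaviors.
Variable Sigma : Type.

Definition word := list Sigma.
Definition lang := word -> Prop.

Inductive behavior : Type :=
| Bphi : behavior
| Beps : behavior
| Bsym : Sigma -> behavior
| Bplus : behavior -> behavior -> behavior
| Bseq : behavior -> behavior -> behavior
| Bstar : behavior -> behavior
| Bfork : behavior -> behavior.

(* shuffle of words: shuffle v w u  <->  u \in v || w *)
Inductive shuffle : word -> word -> word -> Prop :=
| sh_nil_l : forall w, shuffle [] w w
| sh_nil_r : forall v, shuffle v [] v
| sh_left : forall x v y w u, shuffle v (y :: w) u -> shuffle (x :: v) (y :: w) (x :: u)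
| sh_right : forall x v y w u, shuffle (x :: v) w u -> shuffle (x :: v) (y :: w) (y :: u).

Definition shuffle_lang (L M : lang) : lang :=
  fun u => exists v w, L v /\ M w /\ shuffle v w u.

Definition lang_incl (L M : lang) : Prop := forall w, L w -> M w.

(* least fixpoint (w.r.t. inclusion) of a monotone map F : intersection of
   all prefixed points F X ⊆ X (Knaster–Tarski). *)
Definition lfp (F : lang -> lang) : lang :=
  fun w => forall X : lang, lang_incl (F X) X -> X w.

Fixpoint trace (r : behavior) (K : lang) {struct r} : lang :=
  match r with
  | Bphi => fun _ => False
  | Beps => K
  | Bsym x => fun w => exists w', w = x :: w' /\ K w'
  | Bplus r1 r2 => fun w => trace r1 K w \/ trace r2 K w
  | Bseq r1 r2 => trace r1 (trace r2 K)
  | Bstar r1 => lfp (fun X w => trace r1 X w \/ K w)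
  | Bfork r1 => shuffle_lang (trace r1 (fun w => w = [])) K
  end.

Definition trace0 (r : behavior) : lang := trace r (fun w => w = []).

Fixpoint conc (r : behavior) : behavior :=
  match r with
  | Bphi => Bphi
  | Beps => Beps
  | Bsym _ => Bphi
  | Bplus r1 r2 => Bplus (conc r1) (conc r2)
  | Bseq r1 r2 => Bseq (conc r1) (conc r2)
  | Bstar r1 => Bstar (conc r1)
  | Bfork r1 => Bfork r1
  end.

End Behaviors.

Definition finite_type (A : Type) : Prop := exists l : list A, forall x : A, In x l.

(* Main.v *)
Require Import Defs.
From Stdlib Require Import List Setoid.
Import ListNotations.

Inductive sh2 {A : Type} : list A -> list A -> list A -> Prop :=
| s2_nil : sh2 [] [] []
| s2_l : forall x v w u, sh2 v w u -> sh2 (x :: v) w (x :: u)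
| s2_r : forall y v w u, sh2 v w u -> sh2 v (y :: w) (y :: u).

Lemma sh2_nil_l {A} (w : list A) : sh2 [] w w.
Proof. induction w; constructor; auto. Qed.
Lemma sh2_nil_r {A} (w : list A) : sh2 w [] w.
Proof. induction w; constructor; auto. Qed.

Lemma sh_nil_l_inv {A} (w u : list A) : shuffle [] w u -> u = w.
Proof. intro H; inversion H; subst; auto. Qed.
Lemma sh_nil_r_inv {A} (v u : list A) : shuffle v [] u -> u = v.
Proof. intro H; inversion H; subst; auto. Qed.

Lemma shuffle_sh2 {A} (v w u : list A) : shuffle v w u -> sh2 v w u.
Proof.
  induction 1; try constructor; auto using sh2_nil_l, sh2_nil_r.
Qed.

Lemma sh2_shuffle {A} (v w u : list A) : sh2 v w u -> shuffle v w u.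
Proof.
  induction 1.
  - constructor.
  - destruct w as [|y w].
    + apply sh_nil_r_inv in IHsh2; subst. apply sh_nil_r.
    + apply sh_left; auto.
  - destruct v as [|x v].
    + apply sh_nil_l_inv in IHsh2; subst. apply sh_nil_l.
    + apply sh_right; auto.
Qed.

Lemma sh2_comm {A} (v w u : list A) : sh2 v w u -> sh2 w v u.
Proof. induction 1; constructor; auto. Qed.

Lemma sh2_assoc1 {A} {u c t : list A} : sh2 u c t ->
  forall a b, sh2 a b u -> exists v, sh2 b c v /\ sh2 a v t.
Proof.
  induction 1; intros a b Hab.
  - inversion Hab; subst. exists []; split; constructor.
  - inversion Hab as [|x0 a' b0 u0 Hi|y0 a0 b' u0 Hi]; subst.
    + destruct (IHsh2 _ _ Hi) as [m [H1 H2]]. exists m; split; auto. constructor; auto.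
    + destruct (IHsh2 _ _ Hi) as [m [H1 H2]]. exists (x :: m); split; constructor; auto.
  - destruct (IHsh2 _ _ Hab) as [m [H1 H2]]. exists (y :: m); split; constructor; auto.
Qed.

Lemma sh2_assoc2 {A} {a b c v t : list A} : sh2 b c v -> sh2 a v t ->
  exists u, sh2 a b u /\ sh2 u c t.
Proof.
  intros H1 H2. apply sh2_comm in H1. apply sh2_comm in H2.
  destruct (sh2_assoc1 H2 _ _ H1) as [u [Hu1 Hu2]].
  exists u; split; apply sh2_comm; auto.
Qed.

Definition S {A} (L M : lang A) : lang A :=
  fun u => exists v w, L v /\ M w /\ sh2 v w u.

Lemma SE {A} (L M : lang A) u : shuffle_lang L M u <-> S L M u.
Proof.
  split; intros [v [w [H1 [H2 H3]]]]; exists v, w; repeat split; auto.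
  - apply shuffle_sh2; auto.
  - apply sh2_shuffle; auto.
Qed.

Lemma sh2_nil_l_inv {A} (w u : list A) : sh2 [] w u -> u = w.
Proof. intro H; apply sh2_shuffle, sh_nil_l_inv in H; auto. Qed.
Lemma sh2_nil_r_inv {A} (w u : list A) : sh2 w [] u -> u = w.
Proof. intro H; apply sh2_shuffle, sh_nil_r_inv in H; auto. Qed.

Lemma S_eps_r {A} (L : lang A) u : S L (fun w => w = []) u <-> L u.
Proof.
  split.
  - intros [v [w [H1 [H2 H3]]]]; subst. apply sh2_nil_r_inv in H3; subst; auto.
  - intro H; exists u, []; repeat split; auto using sh2_nil_r.
Qed.

Lemma S_ext {A} (L L' M M' : lang A) :
  (forall x, L x <-> L' x) -> (forall x, M x <-> M' x) ->
  forall u, S L M u <-> S L' M' u.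
Proof.
  intros HL HM u; split; intros [v [w [H1 [H2 H3]]]]; exists v, w;
  repeat split; auto; firstorder.
Qed.

Lemma S_mono {A} (L L' M M' : lang A) :
  (forall x, L x -> L' x) -> (forall x, M x -> M' x) ->
  forall u, S L M u -> S L' M' u.
Proof.
  intros HL HM u [v [w [H1 [H2 H3]]]]; exists v, w; repeat split; auto.
Qed.

Lemma S_assoc {A} (L M N : lang A) u : S (S L M) N u <-> S L (S M N) u.
Proof.
  split.
  - intros [v [w [[a [b [Ha [Hb Hab]]]] [Hw Hvw]]]].
    destruct (sh2_assoc1 Hvw _ _ Hab) as [m [H1 H2]].
    exists a, m; repeat split; auto. exists b, w; auto.
  - intros [a [v [Ha [[b [c [Hb [Hc Hbc]]]] Hav]]]].
    destruct (sh2_assoc2 Hbc Hav) as [m [H1 H2]].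
    exists m, c; repeat split; auto. exists a, b; auto.
Qed.

Lemma lfp_least {A} (F : lang A -> lang A) X : lang_incl (F X) X -> lang_incl (lfp F) X.
Proof. intros H w Hw. apply Hw; auto. Qed.

Lemma lfp_pre {A} (F : lang A -> lang A) :
  (forall X Y, lang_incl X Y -> lang_incl (F X) (F Y)) -> lang_incl (F (lfp F)) (lfp F).
Proof.
  intros Hm w Hw X HX. apply HX. eapply Hm; [|exact Hw].
  apply lfp_least; auto.
Qed.

Lemma star_case {A} (T : lang A -> lang A) (L : lang A)
  (HT : forall X w, T X w <-> S L X w) (K : lang A) w0 :
  lfp (fun X w => T X w \/ K w) w0 <->
  S (lfp (fun X w => T X w \/ w = [])) K w0.
Proof.
  set (Ls := lfp (fun X w => T X w \/ w = [])).
  set (Lk := lfp (fun X w => T X w \/ K w)).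
  assert (HmE : forall (K0 : lang A) X Y, lang_incl X Y ->
     lang_incl ((fun X w => T X w \/ K0 w) X) ((fun X w => T X w \/ K0 w) Y)).
  { intros K0 X Y HXY w [Hw|Hw]; [left|right; auto].
    apply HT. apply HT in Hw. eapply S_mono; [| |exact Hw]; auto. }
  pose proof (@lfp_pre A (fun X w => T X w \/ w = []) (HmE (fun w => w = []))) as PreS.
  pose proof (@lfp_pre A (fun X w => T X w \/ K w) (HmE K)) as PreK.
  fold Ls in PreS. fold Lk in PreK.
  split.
  - apply lfp_least. intros u [Hu|Hu].
    + apply HT in Hu. apply S_assoc in Hu.
      eapply S_mono; [| |exact Hu]; auto.
      intros x Hx. apply PreS. left. apply HT; auto.
    + exists [], u; repeat split; auto using sh2_nil_l; apply PreS; right; auto.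
  - intros [v [k [Hv [Hk Hvk]]]].
    set (Y := fun v => forall k u, K k -> sh2 v k u -> Lk u).
    assert (HY : lang_incl Ls Y).
    { apply lfp_least. intros v0 [H0|H0] k0 u0 Hk0 Hs.
      - apply HT in H0. destruct H0 as [l [y [Hl [Hy Hly]]]].
        destruct (sh2_assoc1 Hs _ _ Hly) as [m [H1 H2]].
        apply PreK. left. apply HT. exists l, m; repeat split; auto.
        apply (Hy k0); auto.
      - subst. apply sh2_nil_l_inv in Hs; subst. apply PreK; right; auto. }
    apply (HY v Hv k); auto.
Qed.

Lemma main (Sigma : Type) (r : behavior Sigma) :
  forall K w, trace (conc r) K w <-> S (trace0 (conc r)) K w.
Proof.
  unfold trace0.
  induction r; intros K w; simpl.
  - split; [tauto|]. intros [v [w' [H _]]]; auto.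
  - split.
    + intro H; exists [], w; repeat split; auto using sh2_nil_l.
    + intros [v [w' [H1 [H2 H3]]]]; subst. apply sh2_nil_l_inv in H3; subst; auto.
  - split; [tauto|]. intros [v [w' [H _]]]; auto.
  - rewrite IHr1, IHr2. split.
    + intros [[v [k [H1 [H2 H3]]]]|[v [k [H1 [H2 H3]]]]]; exists v, k; auto.
    + intros [v [k [[H1|H1] [H2 H3]]]]; [left|right]; exists v, k; auto.
  - rewrite IHr1.
    rewrite (@S_ext _ _ (trace (conc r1) (fun w => w = [])) _
                   (S (trace (conc r2) (fun w => w = [])) K)); [|reflexivity|apply IHr2].
    rewrite (@S_ext _ (trace (conc r1) (trace (conc r2) (fun w => w = [])))
               (S (trace (conc r1) (fun w => w = [])) (trace (conc r2) (fun w => w = []))) K K); [|apply IHr1|reflexivity].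
    symmetry. apply S_assoc.
  - apply (@star_case _ (trace (conc r)) (trace (conc r) (fun w => w = []))); auto.
  - rewrite SE.
    apply S_ext; [|reflexivity].
    intro x. rewrite SE. symmetry. apply S_eps_r.
Qed.

Theorem lemma14 (Sigma : Type) (Hfin : finite_type Sigma)
  (r : behavior Sigma) (K : lang Sigma) :
  forall w : word Sigma,
    trace (conc r) K w <-> shuffle_lang (trace0 (conc r)) K w.
Proof.
  intro w. rewrite SE. apply main.
Qed.
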